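(* Let $F=\frac19\begin{pmatrix}1&1&1\\1&1&1\\1&1&1\end{pmatrix}$ (box blur filter). Then the equation $F*X=B$ with the periodic boundary condition, for unknown $X\in\mathbb{R}^{m\times n}$, has a unique solution for every $B\in\mathbb{R}^{m\times n}$ if and only if $m,n\notin\{3l: l\in\mathbb{N}\}$.
   Context: $\mathbb{N}=\{1,2,3,\dots\}$. For $F=[f_{ij}]\in\mathbb{R}^{3\times3}$ and $X=[x_{ij}]\in\mathbb{R}^{m\times n}$, the convolution $F*X\in\mathbb{R}^{m\times n}$ is defined by $[F*X]_{ij}=\sum_{l_1=1}^3\sum_{l_2=1}^3 f_{l_1l_2}\,x_{i-l_1+2,\,j-l_2+2}$ for $1\le i\le m$, $1\le j\le n$, where the periodic boundary condition sets $x_{0j}=x_{mj}$, $x_{m+1,j}=x_{1j}$, $x_{i0}=x_{in}$, $x_{i,n+1}=x_{i1}$ (for all indices $i\in\{0,\dots,m+1\}$, $j\in\{0,\dots,n+1\}$, so corners are also determined, e.g. $x_{00}=x_{mn}$). *)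

(* Defs.v *)
From mathcomp Require Import all_boot all_order all_algebra.
From mathcomp Require Import reals.
Set Implicit Arguments. Unset Strict Implicit. Unset Printing Implicit Defensive.
Import Order.TTheory GRing.Theory Num.Theory.
Local Open Scope ring_scope.

(* With 0-based indices i in 'I_m, j in 'I_n, l1 l2 in 'I_3, the paper's
   x_{i-l1+2, j-l2+2} (1-based, periodic) becomes the entry at row
   (i + m + 1 - l1) mod m and column (j + n + 1 - l2) mod n. *)
Definition periodic_conv (R : pzRingType) (m n : nat) (F : 'M[R]_3)
  (X : 'M[R]_(m.+1, n.+1)) : 'M[R]_(m.+1, n.+1) :=
  \matrix_(i < m.+1, j < n.+1)
    \sum_(l1 < 3) \sum_(l2 < 3)
      F l1 l2 * X (inord ((i + m.+1 + 1 - l1) %% m.+1))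
                  (inord ((j + n.+1 + 1 - l2) %% n.+1)).

Definition box_blur (R : fieldType) : 'M[R]_3 := \matrix_(i, j) (9%:R)^-1.

(* Main.v *)
Require Import Defs.
From mathcomp Require Import all_boot all_order all_algebra.
From mathcomp Require Import reals.
From mathcomp Require Import zify ring lra.
Set Implicit Arguments. Unset Strict Implicit. Unset Printing Implicit Defensive.
Import Order.TTheory GRing.Theory Num.Theory.
Local Open Scope ring_scope.

Definition circ (R : pzRingType) m : 'M[R]_(m.+1) :=
  \matrix_(i, k) \sum_(l < 3)
     ((k == inord ((i + m.+1 + 1 - l) %% m.+1) :> 'I_m.+1)%:R : R).

Lemma sum_delta (R : pzRingType) M (a : 'I_M) (f : 'I_M -> R) :
  \sum_k (k == a)%:R * f k = f a.
Proof.
rewrite (bigD1 a) //= eqxx mul1r big1 ?addr0 // => k /negbTE ->.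
by rewrite mul0r.
Qed.

Lemma sum_delta3 (R : pzRingType) M (a : 'I_3 -> 'I_M) (f : 'I_M -> R) :
  \sum_k (\sum_(l < 3) (k == a l)%:R) * f k = \sum_(l < 3) f (a l).
Proof.
under eq_bigr do rewrite mulr_suml.
rewrite exchange_big /=; apply: eq_bigr => l _; exact: sum_delta.
Qed.

Lemma conv_circ (R : fieldType) m n (X : 'M[R]_(m.+1, n.+1)) :
  periodic_conv (box_blur R) X = 9%:R^-1 *: (circ R m *m X *m (circ R n)^T).
Proof.
apply/matrixP => i j; rewrite !mxE.
under eq_bigr => l1 _ do under eq_bigr => l2 _ do rewrite mxE.
under [in RHS]eq_bigr => k' _ do rewrite !mxE.
under [in RHS]eq_bigr => k' _ do under eq_bigr => k _ do rewrite !mxE.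
under eq_bigr do rewrite -mulr_sumr.
rewrite -mulr_sumr; congr (_ * _).
under [in RHS]eq_bigr => k' _ do rewrite (sum_delta3 (fun l => inord ((i + m.+1 + 1 - l) %% m.+1)) (fun k => X k k')) mulrC.
rewrite sum_delta3.
by rewrite exchange_big.
Qed.

Lemma circ_mul (R : pzRingType) m (v : 'cV[R]_(m.+1)) i :
  (circ R m *m v) i 0 = \sum_(l < 3) v (inord ((i + m.+1 + 1 - l) %% m.+1)) 0.
Proof.
rewrite !mxE; under eq_bigr do rewrite mxE.
exact: (sum_delta3 (fun l => inord ((i + m.+1 + 1 - l) %% m.+1)) (fun k => v k 0)).
Qed.

Definition kv (R : pzRingType) m : 'cV[R]_(m.+1) :=
  \col_i (((i %% 3 == 0)%N)%:R - ((i %% 3 == 1)%N)%:R).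

Lemma kv_ker (R : pzRingType) m : (3 %| m.+1)%N -> circ R m *m kv R m = 0.
Proof.
move=> d3; have /dvdnP [q hq] := d3.
apply/matrixP => i j; rewrite ord1 circ_mul [RHS]mxE.
rewrite !big_ord_recr big_ord0 /= add0r !mxE !inordK ?ltn_pmod //.
rewrite !(modn_dvdm _ d3).
have e : forall l, (l <= 2)%N -> ((i + m.+1 + 1 - l) %% 3 = (i %% 3 + 4 - l) %% 3)%N.
  move=> l hl; move: (nat_of_ord i) => k; rewrite hq; lia.
rewrite !e //.
have [h|[h|h]] : (i %% 3 = 0 \/ i %% 3 = 1 \/ i %% 3 = 2)%N by lia.
all: rewrite h /=.
all: rewrite ?subr0 ?sub0r ?addr0 ?add0r ?subrr ?addNr //.
Qed.

Lemma idx_mod m k l : (l <= 2)%N ->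
  (((k + 1) %% m.+1 + m.+1 + 1 - l) %% m.+1 = (k + 2 - l) %% m.+1)%N.
Proof.
move=> hl.
have -> : ((k + 1) %% m.+1 + m.+1 + 1 - l = (k + 1) %% m.+1 + (m.+1 + 1 - l))%N by lia.
rewrite modnDml.
have -> : (k + 1 + (m.+1 + 1 - l) = (k + 2 - l) + m.+1)%N by lia.
by rewrite modnDr.
Qed.

Lemma circ_inj (R : numDomainType) m (v : 'cV[R]_(m.+1)) :
  ~~ (3 %| m.+1)%N -> circ R m *m v = 0 -> v = 0.
Proof.
move=> n3 hv.
pose w (k : nat) : R := v (inord (k %% m.+1)) 0.
have rel k : w k + w (k + 1)%N + w (k + 2)%N = 0.
  have := congr1 (fun A : 'M[R]_(m.+1,1) => A (inord ((k + 1) %% m.+1)) 0) hv.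
  rewrite circ_mul mxE !big_ord_recr big_ord0 /= add0r inordK ?ltn_pmod //.
  rewrite !idx_mod // /w.
  have -> : (k + 2 - 0 = k + 2)%N by lia.
  have -> : (k + 2 - 1 = k + 1)%N by lia.
  have -> : (k + 2 - 2 = k)%N by lia.
  move=> <-; ring.
have p3 k : w (k + 3)%N = w k.
  have h1 := rel k; have h2 := rel (k + 1)%N.
  rewrite -!addnA /= in h2.
  apply/eqP; rewrite -subr_eq0; apply/eqP.
  have -> : w (k + 3)%N - w k = (w (k + 1)%N + w (k + 2)%N + w (k + 3)%N)
     - (w k + w (k + 1)%N + w (k + 2)%N) by ring.
  by rewrite h1 h2 subrr.
have p3t k t : w (k + 3 * t)%N = w k.
  elim: t => [|t IH]; first by rewrite muln0 addn0.
  have -> : (k + 3 * t.+1 = (k + 3 * t) + 3)%N by lia.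
  by rewrite p3 IH.
have pM k : w (k + m.+1)%N = w k by rewrite /w modnDr.
have step k : w (k + 1)%N = w k.
  have [q [hq|hq]] : exists q, (m.+1 = 3 * q + 1 \/ m.+1 = 3 * q + 2)%N.
    exists (m.+1 %/ 3)%N; move: n3; rewrite /dvdn; lia.
  - by rewrite -(p3t (k + 1)%N q) addnAC -addnA -hq pM.
  - have e2 k' : w (k' + 2)%N = w k' by rewrite -(p3t (k' + 2)%N q) addnAC -addnA -hq pM.
    by rewrite -(e2 (k + 1)%N) -addnA p3.
have cst k : w k = w 0%N.
  elim: k => [//|k IH]; by rewrite -addn1 step.
have w0 : w 0%N = 0.
  have := rel 0%N; rewrite !cst => h.
  have : 3%:R * w 0%N = 0 by rewrite -h; ring.
  by move/eqP; rewrite mulf_eq0 pnatr_eq0 /= => /eqP.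
apply/matrixP => i j; rewrite ord1 mxE.
by have := cst i; rewrite w0 /w modn_small // inord_val.
Qed.

Lemma circ_unit (R : realType) m : ~~ (3 %| m.+1)%N -> circ R m \in unitmx.
Proof.
move=> n3; rewrite -unitmx_tr -row_free_unit -kermx_eq0; apply/eqP/row_matrixP => i.
rewrite row0; set r := row i _.
have h : r *m (circ R m)^T = 0 by apply/eqP; rewrite -sub_kermx row_sub.
have : circ R m *m r^T = 0 by rewrite -[circ R m]trmxK -trmx_mul h trmx0.
by move/(circ_inj n3)/(congr1 trmx); rewrite trmxK trmx0.
Qed.

Theorem corollary2 (R : realType) (m n : nat) :
  (forall B : 'M[R]_(m.+1, n.+1),
     exists! X : 'M[R]_(m.+1, n.+1), periodic_conv (box_blur R) X = B)
  <-> (~ (3 %| m.+1)%N /\ ~ (3 %| n.+1)%N).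
Proof.
have n9 : (9%:R : R) != 0 by rewrite pnatr_eq0.
have n9' : (9%:R^-1 : R) != 0 by rewrite invr_eq0.
split.
- move=> H.
  have [X0 [_ U]] := H 0.
  have c0 : periodic_conv (box_blur R) (0 : 'M[R]_(m.+1, n.+1)) = 0 by rewrite conv_circ mulmx0 mul0mx scaler0.
  have E0 := U 0 c0.
  split.
  + move=> d3.
    pose X := kv R m *m (const_mx 1 : 'M[R]_(1, n.+1)).
    have cX : periodic_conv (box_blur R) X = 0.
      by rewrite conv_circ /X mulmxA (kv_ker R d3) !mul0mx scaler0.
    have := U X cX; rewrite E0 => /matrixP /(_ 0 0).
    rewrite !mxE big_ord1 !mxE /= mulr1 subr0 => /eqP; by rewrite eq_sym oner_eq0.
  + move=> d3.
    pose X := (const_mx 1 : 'M[R]_(m.+1, 1)) *m (kv R n)^T.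
    have cX : periodic_conv (box_blur R) X = 0.
      by rewrite conv_circ /X -!mulmxA -trmx_mul (kv_ker R d3) trmx0 !mulmx0 scaler0.
    have := U X cX; rewrite E0 => /matrixP /(_ 0 0).
    rewrite !mxE big_ord1 !mxE /= mul1r subr0 => /eqP; by rewrite eq_sym oner_eq0.
- move=> [/negP hm /negP hn] B.
  have uA := (@circ_unit R m hm).
  have uA' : (circ R n)^T \in unitmx by rewrite unitmx_tr; exact: (@circ_unit R n hn).
  exists (9%:R *: (invmx (circ R m) *m B *m invmx (circ R n)^T)); split.
  + rewrite conv_circ -scalemxAr -scalemxAl scalerA mulVf // scale1r.
    by rewrite !mulmxA (mulmxV uA) mul1mx -mulmxA (mulVmx uA') mulmx1.
  + move=> Y; rewrite conv_circ => hY.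
    rewrite -hY -scalemxAr -scalemxAl scalerA mulfV // scale1r.
    by rewrite !mulmxA (mulmxK uA') (mulVmx uA) mul1mx.
Qed.
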